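(* Let $A=\mathbb Z[\mathbb R]$ be the integral group ring of the additive group $\mathbb R$, with elements written as finite formal sums $\sum c_\alpha[\alpha]$. Let $d:A\to\mathbb Z$ and $v:A\to\mathbb R$ be the additive homomorphisms with $d([\alpha])=1$, $v([\alpha])=\alpha$, and let $(x,y)\mapsto x\vee y$ be the bi-additive map $A\times A\to A$ with $[\alpha]\vee[\beta]=[\max\{\alpha,\beta\}]$. Let $A^+$ be the set of $\sum_\alpha c_\alpha[\alpha]$ with $c_\alpha=0$ for $\alpha<0$ and $c_\alpha\ge0$ for all $\alpha$. Then for all $\sigma,\tau\in A^+$, $$v(\sigma\vee\tau)\le d(\tau)v(\sigma)+d(\sigma)v(\tau)-\min\{v(\sigma),v(\tau)\}.$$ *)

(* Defs.v *)
From Stdlib Require Import Reals ZArith List.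
Import ListNotations.
Open Scope R_scope.

(* An element of A = Z[R] is represented by a finite formal sum
   sum_i c_i [alpha_i], i.e. a list of pairs (c_i, alpha_i).
   Two lists represent the same element iff they have the same [coef]. *)
Definition A : Type := list (Z * R).

Definition coef (x : A) (g : R) : Z :=
  fold_right (fun p acc => if Req_EM_T (snd p) g then (fst p + acc)%Z else acc) 0%Z x.

Definition gen (a : R) : A := [(1%Z, a)].

Definition d (x : A) : Z := fold_right (fun p acc => (fst p + acc)%Z) 0%Z x.

Definition v (x : A) : R := fold_right (fun p acc => IZR (fst p) * snd p + acc) 0 x.

Definition join (x y : A) : A :=
  flat_map (fun p => map (fun q => ((fst p * fst q)%Z, Rmax (snd p) (snd q))) y) x.

Definition Apos (x : A) : Prop :=
  forall a : R, (a < 0 -> coef x a = 0%Z) /\ (0 <= coef x a)%Z.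

(* Main.v *)
Require Import Defs.
From Stdlib Require Import Reals ZArith List Lra Lia.
Open Scope R_scope.

Definition sumL (f : R -> R) (L : list R) : R :=
  fold_right (fun g acc => f g + acc) 0 L.

Definition S (f : R -> R) (x : A) : R :=
  fold_right (fun p acc => IZR (fst p) * f (snd p) + acc) 0 x.

Lemma sumL_ext f h L : (forall x, In x L -> f x = h x) -> sumL f L = sumL h L.
Proof.
  induction L as [|y L IH]; intros H; simpl; auto.
  rewrite H by (left; auto). rewrite IH; auto. intros; apply H; right; auto.
Qed.

Lemma sumL_zero f L : (forall x, In x L -> f x = 0) -> sumL f L = 0.
Proof.
  induction L as [|y L IH]; intros H; simpl; auto.
  rewrite H by (left; auto). rewrite IH; [ring|]. intros; apply H; right; auto.
Qed.

Lemma sumL_add f h L : sumL (fun x => f x + h x) L = sumL f L + sumL h L.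
Proof. induction L; simpl; [ring| rewrite IHL; ring]. Qed.

Lemma sumL_scal c f L : sumL (fun x => c * f x) L = c * sumL f L.
Proof. induction L; simpl; [ring| rewrite IHL; ring]. Qed.

Lemma sumL_nonneg f L : (forall x, In x L -> 0 <= f x) -> 0 <= sumL f L.
Proof.
  induction L as [|y L IH]; intros H; simpl; [lra|].
  assert (0 <= f y) by (apply H; left; auto).
  assert (0 <= sumL f L) by (apply IH; intros; apply H; right; auto). lra.
Qed.

Lemma sumL_le f h L : (forall x, In x L -> f x <= h x) -> sumL f L <= sumL h L.
Proof.
  induction L as [|y L IH]; intros H; simpl; [lra|].
  assert (f y <= h y) by (apply H; left; auto).
  assert (sumL f L <= sumL h L) by (apply IH; intros; apply H; right; auto). lra.
Qed.

Lemma sumL_ge_elem f L m : (forall x, In x L -> 0 <= f x) -> In m L -> f m <= sumL f L.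
Proof.
  induction L as [|y L IH]; intros H Hm; simpl; [destruct Hm|].
  destruct Hm as [<-|Hm].
  - assert (0 <= sumL f L) by (apply sumL_nonneg; intros; apply H; right; auto). lra.
  - assert (0 <= f y) by (apply H; left; auto).
    assert (f m <= sumL f L) by (apply IH; auto; intros; apply H; right; auto). lra.
Qed.

Lemma delta_notin a k L : ~ In a L ->
  sumL (fun g => if Req_EM_T a g then k g else 0) L = 0.
Proof.
  induction L as [|y L IH]; intros H; simpl; auto.
  destruct (Req_EM_T a y).
  - exfalso; subst; apply H; left; auto.
  - rewrite IH; [ring|]. intro; apply H; right; auto.
Qed.

Lemma delta_in a k L : NoDup L -> In a L ->
  sumL (fun g => if Req_EM_T a g then k g else 0) L = k a.
Proof.
  induction L as [|y L IH]; intros Hn H; simpl; [destruct H|].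
  inversion Hn; subst.
  destruct (Req_EM_T a y).
  - subst. rewrite delta_notin; auto; ring.
  - destruct H as [H|H]; [congruence|]. rewrite IH; auto; ring.
Qed.

Lemma S_rep f x L : NoDup L -> (forall p, In p x -> In (snd p) L) ->
  S f x = sumL (fun g => IZR (coef x g) * f g) L.
Proof.
  intros Hn. induction x as [|[c a] x IH]; intros H.
  - symmetry; apply sumL_zero; intros; simpl; ring.
  - unfold S in *; simpl. rewrite IH by (intros; apply H; right; auto).
    transitivity (sumL (fun g => IZR (coef x g) * f g +
       (if Req_EM_T a g then IZR c * f g else 0)) L).
    + rewrite sumL_add. rewrite (delta_in a (fun g => IZR c * f g)); auto.
      ring. apply (H (c, a)); left; auto.
    + apply sumL_ext; intros g _. unfold coef; simpl.
      destruct (Req_EM_T a g); [rewrite plus_IZR|]; ring.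
Qed.

Lemma v_app l1 l2 : v (l1 ++ l2) = v l1 + v l2.
Proof. induction l1; unfold v in *; simpl; [ring| rewrite IHl1; ring]. Qed.

Lemma v_map c a y : v (map (fun q => ((c * fst q)%Z, Rmax a (snd q))) y) = IZR c * S (Rmax a) y.
Proof. induction y; unfold v, S in *; simpl; [ring| rewrite mult_IZR, IHy; ring]. Qed.

Lemma v_join x y : v (join x y) = S (fun a => S (Rmax a) y) x.
Proof.
  unfold join. induction x as [|[c a] x IH]; simpl; [reflexivity|].
  rewrite v_app, v_map, IH. reflexivity.
Qed.

Lemma d_S x : IZR (d x) = S (fun _ => 1) x.
Proof. induction x; unfold d, S in *; simpl; [ring| rewrite plus_IZR, IHx; ring]. Qed.

Lemma Rmax_eq g h : Rmax g h = g + h - Rmin g h.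
Proof. unfold Rmax, Rmin; destruct Rle_dec; lra. Qed.

Lemma max_exists (P : R -> Prop) (Pdec : forall x, {P x} + {~ P x}) L :
  (forall x, In x L -> ~ P x) \/
  exists m, In m L /\ P m /\ forall x, In x L -> P x -> x <= m.
Proof.
  induction L as [|y L IH].
  - left; intros x [].
  - destruct IH as [IH|[m [Hm1 [Hm2 Hm3]]]]; destruct (Pdec y).
    + right; exists y; split; [left; auto|split; auto].
      intros x [<-|Hx] Px; [lra|]. exfalso; exact (IH x Hx Px).
    + left; intros x [<-|Hx]; auto.
    + destruct (Rle_dec y m).
      * right; exists m; split; [right; auto|split; auto].
        intros x [<-|Hx] Px; auto.
      * right; exists y; split; [left; auto|split; auto].
        intros x [<-|Hx] Px; [lra|]. specialize (Hm3 x Hx Px); lra.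
    + right; exists m; split; [right; auto|split; auto].
      intros x [<-|Hx] Px; [contradiction|auto].
Qed.

Section Key.
Variables (L1 L2 : list R) (a b : R -> R).
Hypothesis Ha : forall g, a g = 0 \/ (1 <= a g /\ 0 <= g).
Hypothesis Hb : forall g, b g = 0 \/ (1 <= b g /\ 0 <= g).

Let B1 := sumL (fun h => b h * 1) L2.
Let V2 := sumL (fun h => b h * h) L2.
Let M g := sumL (fun h => b h * Rmin g h) L2.

Lemma inner_eq g : sumL (fun h => b h * Rmax g h) L2 = g * B1 + V2 - M g.
Proof.
  unfold B1, V2, M. induction L2; simpl; [ring|]. rewrite IHl, Rmax_eq; ring.
Qed.

Lemma outer_eq L : sumL (fun g => a g * sumL (fun h => b h * Rmax g h) L2) L =
  B1 * sumL (fun g => a g * g) L + sumL (fun g => a g * 1) L * V2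
  - sumL (fun g => a g * M g) L.
Proof. induction L; simpl; [ring|]. rewrite IHL, inner_eq; ring. Qed.

Lemma aM_nonneg g : 0 <= a g * M g.
Proof.
  destruct (Ha g) as [E|[E1 E2]]; [rewrite E; lra|].
  apply Rmult_le_pos; [lra|]. apply sumL_nonneg; intros h _.
  destruct (Hb h) as [F|[F1 F2]]; [rewrite F; lra|].
  apply Rmult_le_pos; [lra|]. unfold Rmin; destruct Rle_dec; lra.
Qed.

Lemma T_ge : Rmin (sumL (fun g => a g * g) L1) V2 <= sumL (fun g => a g * M g) L1.
Proof.
  assert (HV1 : 0 <= sumL (fun g => a g * g) L1).
  { apply sumL_nonneg; intros g _; destruct (Ha g) as [E|[E1 E2]];
    [rewrite E; lra| nra]. }
  assert (HV2 : 0 <= V2).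
  { unfold V2; apply sumL_nonneg; intros g _; destruct (Hb g) as [E|[E1 E2]];
    [rewrite E; lra| nra]. }
  assert (HT : 0 <= sumL (fun g => a g * M g) L1).
  { apply sumL_nonneg; intros; apply aM_nonneg. }
  destruct (max_exists (fun g => a g <> 0) (fun g => match Req_EM_T (a g) 0 with
     left e => right (fun h => h e) | right n => left n end) L1)
    as [Z1|[m1 [Im1 [Pm1 Hm1]]]].
  { assert (sumL (fun g => a g * g) L1 = 0).
    { apply sumL_zero; intros g Hg. specialize (Z1 g Hg).
      destruct (Req_EM_T (a g) 0) as [E|E]; [rewrite E; ring| contradiction]. }
    rewrite H. pose proof (Rmin_l 0 V2). lra. }
  destruct (max_exists (fun g => b g <> 0) (fun g => match Req_EM_T (b g) 0 with
     left e => right (fun h => h e) | right n => left n end) L2)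
    as [Z2|[m2 [Im2 [Pm2 Hm2]]]].
  { assert (V2 = 0).
    { unfold V2; apply sumL_zero; intros g Hg. specialize (Z2 g Hg).
      destruct (Req_EM_T (b g) 0) as [E|E]; [rewrite E; ring| contradiction]. }
    rewrite H. pose proof (Rmin_r (sumL (fun g => a g * g) L1) 0). lra. }
  destruct (Rle_dec m1 m2).
  - (* use h = m2 *)
    assert (Hb2 : 1 <= b m2) by (destruct (Hb m2) as [E|[E _]]; [contradiction|auto]).
    assert (sumL (fun g => a g * g) L1 <= sumL (fun g => a g * M g) L1).
    { apply Rle_trans with (sumL (fun g => b m2 * (a g * g)) L1).
      - rewrite sumL_scal. nra.
      - apply sumL_le; intros g Hg.
        destruct (Ha g) as [E|[E1 E2]]; [rewrite E; lra|].
        assert (g <= m2) by (assert (g <= m1) by (apply Hm1; auto; lra); lra).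
        assert (b m2 * Rmin g m2 <= M g).
        { unfold M. apply (sumL_ge_elem (fun h => b h * Rmin g h)); auto.
          intros h _. destruct (Hb h) as [F|[F1 F2]]; [rewrite F; lra|].
          apply Rmult_le_pos; [lra|]. unfold Rmin; destruct Rle_dec; lra. }
        assert (Rmin g m2 = g) by (unfold Rmin; destruct Rle_dec; lra).
        nra. }
    pose proof (Rmin_l (sumL (fun g => a g * g) L1) V2). lra.
  - assert (Ha1 : 1 <= a m1) by (destruct (Ha m1) as [E|[E _]]; [contradiction|auto]).
    assert (a m1 * M m1 <= sumL (fun g => a g * M g) L1).
    { apply (sumL_ge_elem (fun g => a g * M g)); auto; intros; apply aM_nonneg. }
    assert (M m1 = V2).
    { unfold M, V2; apply sumL_ext; intros h Hh.
      destruct (Hb h) as [F|[F1 F2]]; [rewrite F; ring|].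
      assert (h <= m2) by (apply Hm2; auto; lra).
      unfold Rmin; destruct Rle_dec; [|ring]. lra. }
    pose proof (Rmin_r (sumL (fun g => a g * g) L1) V2). nra.
Qed.

Lemma key :
  sumL (fun g => a g * sumL (fun h => b h * Rmax g h) L2) L1 <=
  B1 * sumL (fun g => a g * g) L1 + sumL (fun g => a g * 1) L1 * V2
  - Rmin (sumL (fun g => a g * g) L1) V2.
Proof. rewrite outer_eq. pose proof T_ge. lra. Qed.
End Key.

Lemma coef_prop x (hx : Apos x) g :
  IZR (coef x g) = 0 \/ (1 <= IZR (coef x g) /\ 0 <= g).
Proof.
  destruct (hx g) as [H1 H2]. destruct (Rlt_dec g 0) as [Hg|Hg].
  - left; rewrite H1; auto.
  - destruct (Z.eq_dec (coef x g) 0) as [E|E]; [left; rewrite E; auto|].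
    right; split; [apply IZR_le; lia| lra].
Qed.

Theorem proposition5p1 (sigma tau : A) (hs : Apos sigma) (ht : Apos tau) :
  v (join sigma tau) <=
  IZR (d tau) * v sigma + IZR (d sigma) * v tau - Rmin (v sigma) (v tau).
Proof.
  set (L1 := nodup Req_EM_T (map snd sigma)).
  set (L2 := nodup Req_EM_T (map snd tau)).
  assert (N1 : NoDup L1) by apply NoDup_nodup.
  assert (N2 : NoDup L2) by apply NoDup_nodup.
  assert (I1 : forall p, In p sigma -> In (snd p) L1).
  { intros; apply nodup_In, in_map; auto. }
  assert (I2 : forall p, In p tau -> In (snd p) L2).
  { intros; apply nodup_In, in_map; auto. }
  rewrite v_join, !d_S.
  change (v sigma) with (S (fun a => a) sigma).
  change (v tau) with (S (fun a => a) tau).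
  rewrite (S_rep _ sigma L1), (S_rep _ tau L2), (S_rep _ sigma L1), (S_rep _ tau L2),
    (S_rep _ sigma L1); auto.
  rewrite (sumL_ext _ (fun g => IZR (coef sigma g) *
     sumL (fun h => IZR (coef tau h) * Rmax g h) L2) L1).
  2:{ intros; rewrite (S_rep _ tau L2); auto. }
  pose proof (key L1 L2 (fun g => IZR (coef sigma g)) (fun g => IZR (coef tau g))
     (coef_prop sigma hs) (coef_prop tau ht)) as K.
  cbv beta in K. lra.
Qed.
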